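(* Consider the generalized dynamic-network coding (GDNC) scheme described in the context, with $M\ge 2$ users and integer parameters $k_1\ge 1$, $k_2\ge 1$. Then there is a field size $q_0$ such that for every finite field $\mathrm{GF}(q)$ with $q\ge q_0$ the network-coding coefficients can be chosen so that, for every user $j$ and every broadcast slot $t\in\{1,\dots,k_1\}$, the outage probability $P_{o,j}$ of the information packet $I_j(t)$ at the base station satisfies $$\lim_{\mathrm{SNR}\to\infty}\frac{-\log P_{o,j}}{\log \mathrm{SNR}} = M+k_2,$$ i.e. the diversity order of the GDNC scheme is $D_{\mathrm{GDNC}}=M+k_2$.
   Context: Network model: $M$ users (indexed $1,\dots,M$) each have independent information for a common base station (BS, index $0$). Every single transmission from a user $j$ to a receiver $i\in\{0,1,\dots,M\}\setminus\{j\}$ in a given time slot is received as $y=hx+n$, with $n$ zero-mean Gaussian noise and $h$ a Rayleigh fading coefficient of unit variance; all fading coefficients are independent across transmitters, receivers and time slots (block fading: constant within a transmission, i.i.d. across transmissions), all links have the same average SNR, and all transmissions use the same information rate $R$. A transmitted packet is correctly decoded at a receiver iff $|h|^2\ge g$ where $g=(2^R-1)/\mathrm{SNR}$; otherwise the link is in outage, which happens with probability $P_e=1-e^{-g}$ independently for each link and slot. Receivers have perfect channel state information; transmitters have none. GDNC scheme over $\mathrm{GF}(q)$: packets are treated as elements of (vectors over) $\mathrm{GF}(q)$. Broadcast phase: in each of $k_1$ time slots $t=1,\dots,k_1$, each user $j$ broadcasts a new information packet $I_j(t)$ of its own to the BS and to all other users, each of which independently either decodes it correctly or not (according to the outage model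 above). Cooperative phase: in each of $k_2$ further time slots $t'=1,\dots,k_2$, each user $j$ transmits to the BS a parity packet $P_j(t')$ which is a fixed $\mathrm{GF}(q)$-linear combination (coefficients fixed in advance, not depending on channel realizations) of all $k_1M$ information packets $I_i(s)$, $1\le i\le M$, $1\le s\le k_1$, where any partner packet that user $j$ did not decode correctly is replaced by the all-zero packet. The overall rate is $k_1/(k_1+k_2)$. The BS knows which packets were replaced by zero and which of the $k_1M+k_2M$ transmissions it received correctly; the packet $I_j(t)$ is in outage at the BS if it is not uniquely determined by the correctly received packets (via the resulting linear system). $P_{o,j}$ denotes the probability of this event. The diversity order is $D=\lim_{\mathrm{SNR}\to\infty}(-\log P_{o,j})/\log\mathrm{SNR}$. *)

(* Defs.v *)
From HB Require Import structures.
From mathcomp Require Import all_boot all_order all_algebra.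
From Stdlib Require Import Reals.

Set Implicit Arguments.
Unset Strict Implicit.
Unset Printing Implicit Defensive.

(* Network-coding coefficients: coeffs j t' i s is the coefficient of the
   information packet I_i(s) in the parity packet P_j(t').
   Users are indexed by 'I_M (user number = index + 1), broadcast slots by
   'I_k1, cooperative slots by 'I_k2. *)
Definition coeffs (F : Type) (M k1 k2 : nat) : Type :=
  'I_M -> 'I_k2 -> 'I_M -> 'I_k1 -> F.

(* Transmission links:
   inl (j, s, None)    : broadcast of I_j(s) from user j to the BS
   inl (j, s, Some i)  : broadcast of I_j(s) from user j to user i (i <> j)
   inr (j, t')         : parity packet P_j(t') from user j to the BS *)
Definition link (M k1 k2 : nat) : Type :=
  (('I_M * 'I_k1 * option 'I_M) + ('I_M * 'I_k2))%type.

Definition valid_link (M k1 k2 : nat) (l : link M k1 k2) : bool :=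
  match l with
  | inl (j, _, Some i) => i != j
  | _ => true
  end.

(* A channel realization: true = correctly decoded, false = outage. *)
Definition pattern (M k1 k2 : nat) := {ffun link M k1 k2 -> bool}.

Definition infovec (F : finFieldType) (M k1 : nat) := {ffun 'I_M * 'I_k1 -> F}.

Section Coding.
Local Open Scope ring_scope.
Variables (F : finFieldType) (M k1 k2 : nat).

(* Parity packet P_j(t') formed by user j under realization w: partner
   packets not decoded by user j are replaced by 0. *)
Definition parity (c : coeffs F M k1 k2) (w : pattern M k1 k2)
  (j : 'I_M) (t' : 'I_k2) (x : infovec F M k1) : F :=
  \sum_(p : 'I_M * 'I_k1)
     (if (p.1 == j) || w (inl (p.1, p.2, Some j))
      then c j t' p.1 p.2 * x p else 0).

Definition received_agree (c : coeffs F M k1 k2) (w : pattern M k1 k2)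
  (x y : infovec F M k1) : bool :=
  [forall p : 'I_M * 'I_k1, w (inl (p.1, p.2, None)) ==> (x p == y p)] &&
  [forall jt : 'I_M * 'I_k2,
     w (inr jt) ==> (parity c w jt.1 jt.2 x == parity c w jt.1 jt.2 y)].

Definition determined (c : coeffs F M k1 k2) (w : pattern M k1 k2)
  (j : 'I_M) (t : 'I_k1) : bool :=
  [forall x : infovec F M k1, forall y : infovec F M k1,
     received_agree c w x y ==> (x (j, t) == y (j, t))].

Definition in_outage c w j t : bool := ~~ determined c w j t.

(* Realizations whose (meaningless) self-links are fixed to true, so that
   summing over them sums over the realizations of the genuine links. *)
Definition admissible (w : pattern M k1 k2) : bool :=
  [forall l : link M k1 k2, ~~ valid_link l ==> w l].
End Coding.

Section Probability.
Local Open Scope R_scope.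

Definition Pe (rate snr : R) : R := 1 - exp (- ((Rpower 2 rate - 1) / snr)).

Definition Pout (F : finFieldType) (M k1 k2 : nat) (c : coeffs F M k1 k2)
  (rate snr : R) (j : 'I_M) (t : 'I_k1) : R :=
  \big[Rplus/R0]_(w : pattern M k1 k2 | admissible w && in_outage c w j t)
    \big[Rmult/R1]_(l : link M k1 k2 | valid_link l)
       (if w l then 1 - Pe rate snr else Pe rate snr).

Definition lim_at_infty (f : R -> R) (L : R) : Prop :=
  forall eps : R, 0 < eps -> exists X : R, forall x : R, X < x -> Rabs (f x - L) < eps.
End Probability.

(* Main.v *)
Require Import Defs.
From HB Require Import structures.
From mathcomp Require Import all_boot all_order all_algebra.
From Stdlib Require Import Reals Lia Lra.
Set Implicit Arguments. Unset Strict Implicit. Unset Printing Implicit Defensive.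
Import GRing.Theory.
Section Poly.
Local Open Scope ring_scope.
Variable F : finFieldType.
Fixpoint mp (n : nat) : idomainType := if n is n'.+1 then {poly (mp n')} else F.
Fixpoint cst (n : nat) : {rmorphism F -> mp n} :=
  match n return {rmorphism F -> mp n} with
  | 0 => idfun
  | n'.+1 => (polyC \o cst n')%FUN
  end.
Fixpoint ev (n : nat) (x : nat -> F) : {rmorphism mp n -> F} :=
  match n return {rmorphism mp n -> F} with
  | 0 => idfun
  | n'.+1 => (ev n' x \o horner_eval (cst n' (x n')))%FUN
  end.
Lemma evS n x (p : mp n.+1) : ev n.+1 x p = ev n x p.[cst n (x n)].
Proof. by []. Qed.
Fixpoint var (n : nat) (i : nat) : mp n :=
  match n return mp n with
  | 0 => 0
  | n'.+1 => if i == n' then 'X else (var n' i)%:P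
  end.

Lemma ev_cst n x a : ev n x (cst n a) = a.
Proof. elim: n => [//|n IH]; by rewrite evS /= hornerC IH. Qed.

Lemma ev_ext n x y (p : mp n) : (forall i : nat, (i < n)%nat -> x i = y i) -> ev n x p = ev n y p.
Proof.
elim: n p => [//|n IH] p H; rewrite !evS H // IH // => i Hi; apply: H; exact: ltnW.
Qed.

Lemma ev_var n x i : (i < n)%nat -> ev n x (var n i) = x i.
Proof.
elim: n => [//|n IH] Hi; rewrite evS /=.
case: eqP => [->|Hne]; first by rewrite hornerX ev_cst.
rewrite hornerC IH //; rewrite ltnS leq_eqVlt in Hi; case/orP: Hi => // /eqP; done.
Qed.

Fixpoint bnd (n : nat) : nat -> mp n -> Prop :=
  match n return nat -> mp n -> Prop with
  | 0 => fun _ _ => True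
  | n'.+1 => fun D p => (size p <= D.+1)%nat /\ forall i, bnd D (p`_i)
  end.

Lemma bnd_mono n D D' (p : mp n) : (D <= D')%nat -> bnd D p -> bnd D' p.
Proof.
elim: n p => [//|n IH] p HD /= [Hs Hc]; split; first exact: leq_trans Hs _.
by move=> i; apply: IH.
Qed.

Lemma bnd0 n D : bnd D (0 : mp n).
Proof. elim: n => [//|n IH] /=; split; first by rewrite size_poly0. by move=> i; rewrite coef0. Qed.

Lemma bnd_add n D (p q : mp n) : bnd D p -> bnd D q -> bnd D (p + q).
Proof.
elim: n p q => [//|n IH] p q /= [Hp Hpc] [Hq Hqc]; split.
  by apply: leq_trans (size_polyD _ _) _; rewrite geq_max Hp Hq.
by move=> i; rewrite coefD; apply: IH.
Qed.

Lemma bnd_opp n D (p : mp n) : bnd D p -> bnd D (- p).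
Proof.
elim: n p => [//|n IH] p /= [Hp Hpc]; split; first by rewrite size_polyN.
by move=> i; rewrite coefN; apply: IH.
Qed.

Lemma bnd_sum n D (I : finType) (P : pred I) (f : I -> mp n) :
  (forall i, P i -> bnd D (f i)) -> bnd D (\sum_(i | P i) f i).
Proof.
move=> H; apply: (big_ind (bnd D)) => //; [exact: bnd0 | exact: bnd_add].
Qed.

Lemma bnd_mul n D1 D2 (p q : mp n) : bnd D1 p -> bnd D2 q -> bnd (D1 + D2) (p * q).
Proof.
elim: n p q => [//|n IH] p q /= [Hp Hpc] [Hq Hqc]; split.
  apply: leq_trans (size_mul_leq _ _) _.
  have := leq_add Hp Hq; rewrite addSn addnS /=; move=> h.
  by rewrite -subn1 leq_subLR add1n.
move=> i; rewrite coefM; apply: (big_ind (bnd (D1 + D2))) => //.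
- exact: bnd0.
- exact: bnd_add.
- by move=> j _; apply: IH.
Qed.

Lemma bnd_cst n D a : bnd D (cst n a).
Proof.
elim: n => [//|n IH] /=; split.
  by apply: (leq_trans (size_polyC_leq1 (cst n a))).
by move=> i; rewrite coefC; case: eqP => _ //; exact: bnd0.
Qed.

Lemma bnd_1 n D : bnd D (1 : mp n).
Proof. rewrite -(rmorph1 (cst n)); exact: bnd_cst. Qed.

Lemma bnd_var n i : bnd 1 (var n i).
Proof.
elim: n => [//|n IH] /=; case: eqP => _ /=; split.
- by rewrite size_polyX.
- move=> j; rewrite coefX; case: eqP => _; [exact: bnd_1 | exact: bnd0].
- by apply: leq_trans (size_polyC_leq1 _) _.
- by move=> j; rewrite coefC; case: eqP => _ //; exact: bnd0.
Qed.

Lemma bnd_prod n D k (f : 'I_k -> mp n) :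
  (forall i, bnd D (f i)) -> bnd (k * D) (\prod_(i < k) f i).
Proof.
elim: k f => [|k IH] f H; first by rewrite big_ord0 -(rmorph1 (cst n)); exact: bnd_cst.
rewrite big_ord_recr /= mulSn addnC; apply: bnd_mul => //; exact: IH.
Qed.

Lemma bnd_det n k (A : 'M[mp n]_k) : (forall i j, bnd 1 (A i j)) -> bnd k (\det A).
Proof.
move=> H; rewrite /determinant; apply: bnd_sum => s _.
apply: (@bnd_mono _ (0 + k)) => //; apply: bnd_mul.
  case: (perm.odd_perm s); rewrite ?expr1 ?expr0; [apply: bnd_opp | ]; exact: bnd_1.
apply: (@bnd_mono _ (k * 1)); first by rewrite muln1.
apply: bnd_prod => i; exact: H.
Qed.

Lemma exists_nonroot n D (p : mp n) : (D < #|F|)%nat -> p != 0 -> bnd D p ->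
  exists x, ev n x p != 0.
Proof.
move=> HD; elim: n p => [|n IH] p Hp /=; first by move=> _; exists (fun _ => 0).
move=> [Hs Hc].
have Hl : lead_coef p != 0 by rewrite lead_coef_eq0.
have [x Hx] := IH _ Hl (Hc _).
set q := map_poly (ev n x) p.
have Hq : size q = size p by apply: size_map_poly_id0.
have Hq0 : q != 0 by rewrite -size_poly_gt0 Hq size_poly_gt0.
have [a Ha] : exists a, ~~ root q a.
  apply/existsP; rewrite -negb_forall; apply/negP => /forallP Hall.
  have := max_poly_roots Hq0 (rs := enum F).
  rewrite enum_uniq => /(_ _ isT); rewrite -cardE.
  have -> : all (root q) (enum F) by apply/allP => y _; exact: Hall.
  move=> /(_ isT) h; have := leq_trans h (leq_trans (eq_leq Hq) Hs).
  by rewrite ltnS leqNgt HD.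
pose y := fun i => if i == n then a else x i.
exists y; rewrite /= horner_evalE.
have -> : ev n y p.[cst n (y n)] = ev n x p.[cst n (y n)].
  by apply: ev_ext => i Hi; rewrite /y; case: eqP => // e; rewrite e ltnn in Hi.
rewrite -horner_map ev_cst /y eqxx.
exact: Ha.
Qed.
End Poly.

Section Greedy.
Variables (T S : finType) (s0 : S).
Lemma greedy (U : {set T}) (C : T -> {set S}) :
  (forall p, p \in U -> #|U| <= #|C p|) ->
  exists m : {ffun T -> S}, (forall p, p \in U -> m p \in C p) /\
    (forall p p', p \in U -> p' \in U -> m p = m p' -> p = p').
Proof.
move: {2}#|U| (erefl #|U|) => n; elim: n U => [|n IH] U HU HC.
  exists [ffun=> s0]; split=> p; move/eqP: HU; rewrite cards_eq0 => /eqP ->; by rewrite inE.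
have : 0 < #|U| by rewrite HU.
case/card_gt0P => p0 Hp0.
have HU' : #|U :\ p0| = n by move: HU; rewrite (cardsD1 p0) Hp0 add1n => -[].
have [m' [Hm1 Hm2]] : exists m' : {ffun T -> S}, (forall p, p \in U :\ p0 -> m' p \in C p) /\
    (forall p p', p \in U :\ p0 -> p' \in U :\ p0 -> m' p = m' p' -> p = p').
  apply: IH => // p; rewrite in_setD1 => /andP [_ Hp]; rewrite HU'.
  by apply: leq_trans (HC _ Hp); rewrite HU.
have : 0 < #|C p0 :\: (m' @: (U :\ p0))|.
  rewrite cardsD subn_gt0; apply: leq_ltn_trans (subset_leq_card (subsetIr _ _)) _.
  apply: leq_ltn_trans (leq_imset_card _ _) _; rewrite HU'.
  by have := HC _ Hp0; rewrite HU.
case/card_gt0P => s; rewrite in_setD => /andP [Hs1 Hs2].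
exists [ffun p => if p == p0 then s else m' p]; split.
  move=> p Hp; rewrite ffunE; case: eqP => [->|/eqP Hne] //.
  by apply: Hm1; rewrite in_setD1 Hne.
move=> p p' Hp Hp'; rewrite !ffunE.
case: (eqVneq p p0) => [->|Hne]; case: (eqVneq p' p0) => [->|Hne'] //.
- move=> E; exfalso; move/negP: Hs1; apply; rewrite E; apply: imset_f.
  by rewrite in_setD1 Hne'.
- move=> E; exfalso; move/negP: Hs1; apply; rewrite -E; apply: imset_f.
  by rewrite in_setD1 Hne.
- by apply: Hm2; rewrite in_setD1 ?Hne ?Hne'.
Qed.
End Greedy.

Section Net.
Variables M k1 k2 : nat.
Definition PT := ('I_M * 'I_k1)%type.
Definition QT := ('I_M * 'I_k2)%type.
Definition known (w : pattern M k1 k2) (p : PT) (j : 'I_M) : bool :=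
  (p.1 == j) || w (inl (p.1, p.2, Some j)).
Definition inU (w : pattern M k1 k2) (p : PT) : bool := ~~ w (inl (p.1, p.2, None)).
Definition validm (w : pattern M k1 k2) (m : {ffun PT -> QT}) : bool :=
  [forall p, inU w p ==> w (inr (m p)) && known w p (m p).1] &&
  [forall p, forall p', (inU w p && inU w p' && (m p == m p')) ==> (p == p')].
Definition FLs (w : pattern M k1 k2) : {set link M k1 k2} :=
  [set l | valid_link l && ~~ w l].
Definition nf w := #|FLs w|.

Lemma card_union3 (T : finType) (A B C : {set T}) :
  A :&: B = set0 -> A :&: C = set0 -> B :&: C = set0 ->
  #|A :|: B :|: C| = #|A| + #|B| + #|C|.
Proof.
move=> hAB hAC hBC.
have e1 := cardsUI A B; rewrite hAB cards0 addn0 in e1.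
have e2 := cardsUI (A :|: B) C.
rewrite setIUl hAC hBC setU0 cards0 addn0 in e2.
by rewrite e2 e1.
Qed.

Lemma count_fail w (p : PT) :
  #|[set q | inU w q]| + #|[set jt : QT | ~~ w (inr jt)]| + #|[set j | ~~ known w p j]|
   <= nf w.
Proof.
pose f1 := fun q : PT => (inl (q.1, q.2, None) : link M k1 k2).
pose f2 := fun jt : QT => (inr jt : link M k1 k2).
pose f3 := fun j : 'I_M => (inl (p.1, p.2, Some j) : link M k1 k2).
have i1 : injective f1 by move=> [a b] [c d] [-> ->].
have i2 : injective f2 by move=> a b [->].
have i3 : injective f3 by move=> a b [->].
rewrite -(card_imset _ i1) -(card_imset _ i2) -(card_imset _ i3).
rewrite -card_union3; first last.
- by apply/setP => l; rewrite !inE; apply/negP => /andP [/imsetP [? _ ->] /imsetP [? _ E]].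
- by apply/setP => l; rewrite !inE; apply/negP => /andP [/imsetP [? _ ->] /imsetP [? _ E]].
- by apply/setP => l; rewrite !inE; apply/negP => /andP [/imsetP [? _ ->] /imsetP [? _ E]].
apply: subset_leq_card; apply/subsetP => l; rewrite !inE.
case/orP => [/orP []|] /imsetP [x Hx ->]; move: Hx; rewrite /FLs !inE /=.
- by [].
- by [].
- rewrite /known negb_or => /andP [H1 H2]; by rewrite eq_sym H1.
Qed.

Lemma exists_matching w : (0 < M)%nat -> (0 < k2)%nat -> nf w < M + k2 -> exists m, validm w m.
Proof.
move=> HM Hk2 Hnf.
pose s0 : QT := (Ordinal HM, Ordinal Hk2).
pose U := [set q | inU w q].
pose C := fun p : PT => [set jt : QT | w (inr jt) && known w p jt.1].
have HC : forall p, p \in U -> #|U| <= #|C p|.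
  move=> p _.
  have h1 := count_fail w p.
  set e := #|U| in h1 *; set f := #|[set jt : QT | ~~ w (inr jt)]| in h1.
  set g := #|[set j | ~~ known w p j]| in h1.
  have h2 : #|C p| + f + g * k2 >= M * k2.
    have -> : M * k2 = #|C p| + #|~: C p| by rewrite cardsC card_prod !card_ord.
    rewrite -addnA leq_add2l.
    have -> : g * k2 = #|setX [set j | ~~ known w p j] [set: 'I_k2]| by rewrite cardsX cardsT card_ord.
    apply: leq_trans (leq_card_setU _ _); apply: subset_leq_card; apply/subsetP => -[j t'].
    by rewrite !inE /= andbT negb_and.
  have h3 : g <= M.-1.
    apply: (@leq_trans #|[set~ p.1]|); last by rewrite cardsC1 card_ord.
    apply: subset_leq_card; apply/subsetP => j.
    rewrite !inE /known negb_or => /andP [H _]; by rewrite eq_sym.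
  move: h1 h2 h3 Hnf (Hk2) (HM); set c := #|C p|; set nn := nf w.
  clearbody e f g c nn; move=> /leP h1 /leP h2 /leP h3 /leP Hnf /leP Hk2' /leP HM'; apply/leP.
  rewrite -!plusE -!multE in h1 h2 h3 Hnf *. 
  have : (0 <= (M.-1 - g) * (k2 - 1))%coq_nat by lia.
  nia.
have [m [Hm1 Hm2]] := greedy s0 HC.
exists m; apply/andP; split.
  apply/forallP => p; apply/implyP => Hp; have := Hm1 p; rewrite !inE; exact.
apply/forallP => p; apply/forallP => p'; apply/implyP => /andP [/andP [H1 H2] /eqP H3].
by apply/eqP; apply: Hm2; rewrite // inE.
Qed.
End Net.

Section Mat.
Local Open Scope ring_scope.
Variables (F : finFieldType) (M k1 k2 : nat).
Local Notation P := (PT M k1).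
Local Notation Q := (QT M k2).
Definition VT := (Q * P)%type.
Local Notation K := #|{: VT}|.
Local Notation N := #|{: P}|.

Definition Bmat (w : pattern M k1 k2) (m : {ffun P -> Q}) : 'M[mp F K]_N :=
  \matrix_(a, b)
    (if inU w (enum_val a) then
       (if inU w (enum_val b) && known w (enum_val b) (m (enum_val a)).1
        then var F K (enum_rank (m (enum_val a), enum_val b)) else 0)
     else (if enum_val a == enum_val b then 1 else 0)).

Definition cof (x : nat -> F) : coeffs F M k1 k2 :=
  fun j t' i s => x (enum_rank (((j, t'), (i, s)) : VT)).

Lemma Bmat_ev1 w m : validm w m ->
  map_mx (ev K (fun i => if [exists p, inU w p && (nat_of_ord (enum_rank ((m p, p) : VT)) == i)]
                          then 1 else 0)) (Bmat w m) = 1%:M.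
Proof.
move=> /andP [/forallP H1 /forallP H2].
apply/matrixP => a b; rewrite !mxE.
case: ifP => Ha.
  case: ifP => Hb.
    rewrite ev_var //.
    case: ifP.
      case/existsP => p /andP [Hp /eqP E].
      have E' := ord_inj E; move/(f_equal enum_val): E'; rewrite !enum_rankK => -[E1 E2].
      have := H2 p; move/forallP/(_ (enum_val a)); rewrite Hp Ha E1 eqxx /= => /eqP Epa.
      have -> : a = b by apply: enum_val_inj; rewrite -E2 -Epa.
      by rewrite eqxx.
    move/negbT; rewrite negb_exists => /forallP /(_ (enum_val b)).
    case: (eqVneq a b) => [->|Hab]; first by rewrite eqxx andbT; move/andP: Hb => [-> _].
    by [].
  rewrite rmorph0; case: (eqVneq a b) => [Eab|] //.
  subst b; have := H1 (enum_val a); rewrite Ha /= => /andP [_ Hk]; by rewrite Ha Hk in Hb.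
rewrite (inj_eq enum_val_inj); case: (a == b); by rewrite ?rmorph1 ?rmorph0.
Qed.

Lemma Bmat_det_neq0 w m : validm w m -> \det (Bmat w m) != 0.
Proof.
move=> Hv; apply/negP => /eqP H0.
have := Bmat_ev1 Hv; move/(f_equal determinant); rewrite det_map_mx H0 rmorph0 det1.
by move/eqP; rewrite eq_sym oner_eq0.
Qed.

End Mat.

Section Det.
Local Open Scope ring_scope.
Variables (F : finFieldType) (M k1 k2 : nat).
Local Notation P := (PT M k1).
Local Notation Q := (QT M k2).
Local Notation K := #|{: VT M k1 k2}|.
Local Notation N := #|{: P}|.

Lemma sum_reindexP (G : P -> F) : \sum_(b < N) G (enum_val b) = \sum_(p : P) G p.
Proof.
rewrite (reindex (@enum_rank P)) /=; last exact: onW_bij (enum_rank_bij _).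
by apply: eq_bigr => p _; rewrite enum_rankK.
Qed.

Lemma determined_of x w m : validm w m ->
  \det (map_mx (ev K x) (Bmat F w m)) != 0 ->
  forall j t, determined (@cof F M k1 k2 x) w j t.
Proof.
move=> /andP [/forallP Hv1 _] Hdet j t.
apply/forallP => x1; apply/forallP => y1; apply/implyP => /andP [/forallP Hd /forallP Hp].
suff Hall : forall p, x1 p = y1 p by rewrite Hall.
have HdP : forall p : P, ~~ inU w p -> x1 p = y1 p.
  move=> p; rewrite /inU negbK => H; by have := Hd p; rewrite H => /eqP.
set Bev := map_mx (ev K x) (Bmat F w m).
pose z : 'cV[F]_N := \col_a (x1 (enum_val a) - y1 (enum_val a)).
have Hz : Bev *m z = 0.
  apply/matrixP => a i; rewrite !mxE.
  under eq_bigr do rewrite !mxE.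
  rewrite (sum_reindexP (fun p => ev K x (if inU w (enum_val a) then
       (if inU w p && known w p (m (enum_val a)).1
        then var F K (enum_rank ((m (enum_val a), p) : VT M k1 k2)) else 0)
     else (if enum_val a == p then 1 else 0)) * (x1 p - y1 p))).
  case: (boolP (inU w (enum_val a))) => Ha.
  - have := Hv1 (enum_val a); rewrite Ha /= => /andP [Hw _].
    have := Hp (m (enum_val a)); rewrite Hw /= => /eqP.
    rewrite /parity; case: (m (enum_val a)) => j' t' /= Epar.
    have : \sum_(p : P) (if known w p j' then @cof F M k1 k2 x j' t' p.1 p.2 * (x1 p - y1 p) else 0) = 0.
      rewrite (eq_bigr (fun p => (if known w p j' then @cof F M k1 k2 x j' t' p.1 p.2 * x1 p else 0)
         - (if known w p j' then @cof F M k1 k2 x j' t' p.1 p.2 * y1 p else 0))).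
        by rewrite sumrB Epar subrr.
      by move=> p _; case: ifP => _; rewrite ?subrr ?mulrBr.
    move=> E0; rewrite -[X in _ = X]E0; apply: eq_bigr => -[i0 s0] _.
    case: (boolP (inU w (i0, s0))) => Hi /=.
      case: ifP => Hk //=; last by rewrite rmorph0 mul0r.
      by rewrite ev_var.
    by rewrite (HdP _ Hi) subrr !mulr0; case: ifP.
  - rewrite (bigD1 (enum_val a)) //= big1 ?eqxx ?rmorph1 ?mul1r ?addr0.
      by rewrite (HdP _ Ha) subrr.
    by move=> p /negbTE Hne; rewrite eq_sym Hne rmorph0 mul0r.
have Hunit : Bev \in unitmx by rewrite unitmxE unitfE.
have Hz0 : z = 0 by rewrite -(mulKmx Hunit z) Hz mulmx0.
move=> p; have := congr1 (fun z : 'cV[F]_N => z (enum_rank p) 0) Hz0.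
rewrite !mxE enum_rankK => /eqP; rewrite subr_eq0 => /eqP //.
Qed.
End Det.

Section Main.
Local Open Scope ring_scope.
Lemma bnd_prod_seq (F : finFieldType) (n D : nat) (I : Type) (r : seq I) (Pr : pred I) (f : I -> mp F n) :
  (forall i, Pr i -> @bnd F n D (f i)) -> @bnd F n (size r * D) (\prod_(i <- r | Pr i) f i).
Proof.
move=> H; elim: r => [|a r IH]; first by rewrite big_nil; exact: bnd_1.
rewrite big_cons /=; case: ifP => Ha.
  by rewrite mulSn; apply: bnd_mul => //; exact: H.
by apply: bnd_mono IH; rewrite mulSn leq_addl.
Qed.

Definition CfT (M k1 k2 : nat) := (pattern M k1 k2 * {ffun PT M k1 -> QT M k2})%type.


Lemma alg_main (M k1 k2 : nat) : (0 < M)%nat -> (0 < k2)%nat ->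
  exists q0 : nat, forall F : finFieldType, (q0 <= #|F|)%nat ->
    exists c : coeffs F M k1 k2, forall w j t, in_outage c w j t -> (M + k2 <= nf w)%nat.
Proof.
move=> HM Hk2.
exists (size (index_enum (CfT M k1 k2)) * #|{: PT M k1}|).+1 => F HF.
pose Qp := (\prod_(cf : CfT M k1 k2 | validm cf.1 cf.2) \det (Bmat F cf.1 cf.2)).
have HQ : Qp != 0.
  by apply/prodf_neq0 => cf Hv; exact: Bmat_det_neq0.
have HB : bnd (size (index_enum (CfT M k1 k2)) * #|{: PT M k1}|) Qp.
  apply: bnd_prod_seq => cf _; apply: bnd_det => a b; rewrite mxE.
  case: ifP => _; first (case: ifP => _; [exact: bnd_var | exact: bnd0]).
  by case: ifP => _; [exact: bnd_1 | exact: bnd0].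
have [x Hx] := exists_nonroot HF HQ HB.
exists (@cof F M k1 k2 x) => w j t Hout.
rewrite leqNgt; apply/negP => Hlt.
have [m Hm] := exists_matching HM Hk2 Hlt.
have Hdet : \det (map_mx (ev #|{: VT M k1 k2}| x) (Bmat F w m)) != 0.
  move: Hx; rewrite /Qp rmorph_prod => /prodf_neq0 /(_ (w, m) Hm).
  by rewrite det_map_mx.
by move: Hout; rewrite /in_outage (determined_of Hm Hdet).
Qed.
End Main.

Section W0.
Variables (M k1 k2 : nat).
Definition w0 (j : 'I_M) (t : 'I_k1) : pattern M k1 k2 :=
  [ffun l : link M k1 k2 => match l with
   | inl (i, s, None) => ~~ ((i == j) && (s == t))
   | inl (i, s, Some r) => ~~ ((i == j) && (s == t) && (r != j))
   | inr (i, _) => i != j end].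

Lemma w0_adm j t : admissible (w0 j t).
Proof.
apply/forallP => -[[[i s] [r|]]|[i t']] //=.
rewrite negbK /w0 ffunE /=; apply/implyP => /eqP Eri; subst r.
by case: (i == j); case: (s == t).
Qed.

Lemma w0_nf j t : (0 < M)%nat -> (nf (w0 j t) <= M + k2)%nat.
Proof.
move=> HM.
pose A := [set (inl (j, t, None) : link M k1 k2)].
pose B := (fun r : 'I_M => (inl (j, t, Some r) : link M k1 k2)) @: [set~ j].
pose C := (fun jt : QT M k2 => (inr jt : link M k1 k2)) @: [set jt : QT M k2 | jt.1 == j].
apply: (@leq_trans #|A :|: B :|: C|).
  apply: subset_leq_card; apply/subsetP => -[[[i s] [r|]]|[i t']];
    rewrite /FLs !inE /w0 ffunE /= ?negbK.
  - case/andP => Hri /andP [/andP [/eqP Ei /eqP Es] Hr]; subst i s.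
    by apply/orP; left; apply/orP; right; apply: imset_f; rewrite !inE.
  - case/andP => [/eqP Ei /eqP Es]; subst; by rewrite eqxx.
  - move=> Hi; apply/orP; right; apply/imsetP; exists (i, t') => //; by move: Hi; rewrite inE /= ?negbK.
apply: (leq_trans (leq_card_setU _ _)).
have -> : (M + k2 = 1 + M.-1 + k2)%nat by rewrite add1n prednK.
rewrite leq_add //.
  apply: (leq_trans (leq_card_setU _ _)); rewrite leq_add ?cards1 //.
  apply: (leq_trans (leq_imset_card _ _)); by rewrite cardsC1 card_ord.
apply: (leq_trans (leq_imset_card _ _)).
have -> : [set jt : QT M k2 | jt.1 == j] = setX [set j] [set: 'I_k2].
  by apply/setP => -[a b]; rewrite !inE andbT.
by rewrite cardsX cards1 cardsT card_ord mul1n.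
Qed.

End W0.
Section W0b.
Local Open Scope ring_scope.
Variables (M k1 k2 : nat).
Lemma w0_outage (F : finFieldType) (c : coeffs F M k1 k2) j t : in_outage c (@w0 M k1 k2 j t) j t.
Proof.
rewrite /in_outage /determined negb_forall; apply/existsP; exists [ffun=> 0].
rewrite negb_forall; apply/existsP; exists [ffun p => if p == (j, t) then 1 else 0].
rewrite negb_imply; apply/andP; split; last by rewrite !ffunE eqxx eq_sym oner_eq0.
apply/andP; split.
  apply/forallP => -[i s] /=; rewrite ffunE /= !ffunE; apply/implyP => H.
  case: ifP => // /eqP [Ei Es]; by rewrite Ei Es !eqxx in H.
apply/forallP => -[i t'] /=; rewrite ffunE /=; apply/implyP => Hi.
rewrite /parity !big1 // => -[i0 s0] _ /=; rewrite !ffunE /=.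
  case: (eqVneq (i0, s0) (j, t)) => [[-> ->]|Hne]; last by case: ifP; rewrite // GRing.mulr0.
  by rewrite eq_sym (negbTE Hi) /= !eqxx /=.
by case: ifP; rewrite // GRing.mulr0.
Qed.
End W0b.

Lemma Rplus_assoc' : associative Rplus.
Proof. by move=> a b c; rewrite Rplus_assoc. Qed.
Lemma Rmult_assoc' : associative Rmult.
Proof. by move=> a b c; rewrite Rmult_assoc. Qed.
HB.instance Definition _ := Monoid.isComLaw.Build R R0 Rplus Rplus_assoc' Rplus_comm Rplus_0_l.
HB.instance Definition _ := Monoid.isComLaw.Build R R1 Rmult Rmult_assoc' Rmult_comm Rmult_1_l.

Section Anal.
Local Open Scope R_scope.

Lemma iter_mult n x : iter n (Rmult x) 1 = x ^ n.
Proof. elim: n => [//|n IH] /=; by rewrite IH. Qed.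

Lemma iter_plus n x : iter n (Rplus x) 0 = INR n * x.
Proof. elim: n => [|n IH]; first (simpl; lra). rewrite iterS IH S_INR; lra. Qed.

Lemma ln_le' x y : 0 < x -> x <= y -> ln x <= ln y.
Proof. move=> Hx [H|->]; [left; exact: ln_increasing | right; done]. Qed.

Lemma lim_gen (f : R -> R) (d : nat) (lo hi S0 : R) : 0 < lo ->
  (forall snr, S0 < snr -> lo <= f snr * snr ^ d <= hi) ->
  lim_at_infty (fun snr => - ln (f snr) / ln snr) (INR d).
Proof.
move=> Hlo Hb eps Heps.
pose L := Rabs (ln lo) + Rabs (ln hi).
exists (Rmax (Rmax S0 1) (exp (L / eps))) => snr Hs.
have HS0 : S0 < snr by apply: Rle_lt_trans Hs; apply: Rle_trans (Rmax_l _ _) (Rmax_l _ _).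
have H1 : 1 < snr by apply: Rle_lt_trans Hs; apply: Rle_trans (Rmax_r _ _) (Rmax_l _ _).
have HE : exp (L / eps) < snr by apply: Rle_lt_trans Hs; apply: Rmax_r.
have Hsp : 0 < snr by lra.
have Hls : L / eps < ln snr.
  rewrite -(ln_exp (L / eps)); exact: ln_increasing (exp_pos _) HE.
have Hln0 : 0 < ln snr by rewrite -ln_1; apply: ln_increasing; lra.
have [Hb1 Hb2] := Hb _ HS0.
have Hpd : 0 < snr ^ d by apply: pow_lt.
have Hf : 0 < f snr.
  case: (Rlt_le_dec 0 (f snr)) => // Hn; exfalso.
  have : f snr * snr ^ d <= 0 by nra.
  lra.
have HV : ln (f snr * snr ^ d) = ln (f snr) + INR d * ln snr.
  by rewrite ln_mult // ln_pow.
have HVb : Rabs (ln (f snr * snr ^ d)) <= L.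
  have h1 := ln_le' Hlo Hb1.
  have h2 := ln_le' (Rlt_le_trans _ _ _ Hlo Hb1) Hb2.
  rewrite /L; apply: Rabs_le; split.
  - have := Rle_abs (- ln lo); rewrite Rabs_Ropp; have := Rabs_pos (ln hi); lra.
  - have := Rle_abs (ln hi); have := Rabs_pos (ln lo); lra.
rewrite HV in HVb.
have HLe : L < eps * ln snr.
  have := Rmult_lt_compat_l eps _ _ Heps Hls.
  by rewrite /Rdiv Rmult_comm Rmult_assoc Rinv_l ?Rmult_1_r; lra.
set V := ln (f snr) + INR d * ln snr in HVb.
have Hexpr : (- ln (f snr) / ln snr - INR d) * ln snr = - V.
  rewrite /V; field; lra.
have hb1 := Rle_abs V; have hb2 := Rle_abs (- V); rewrite Rabs_Ropp in hb2.
apply: Rabs_def1.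
- set e := (- ln (f snr) / ln snr - INR d) in Hexpr *.
  nra.
- set e := (- ln (f snr) / ln snr - INR d) in Hexpr *.
  nra.
Qed.
End Anal.

Section Bounds.
Local Open Scope R_scope.

Lemma pow_le1 x n : 0 <= x <= 1 -> x ^ n <= 1.
Proof.
move=> Hx; elim: n => [|n IH] /=; first lra.
have := pow_le x n; nra.
Qed.

Lemma Rle_pow_le1 x m n : 0 <= x <= 1 -> (m <= n)%nat -> x ^ n <= x ^ m.
Proof.
move=> Hx /subnKC <-; rewrite pow_add.
have := pow_le1 (n - m) Hx; have := pow_le x m; nra.
Qed.
Variables (M k1 k2 : nat).

Lemma prod_pat (w : pattern M k1 k2) pe :
  \big[Rmult/R1]_(l : link M k1 k2 | valid_link l) (if w l then 1 - pe else pe)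
  = (1 - pe) ^ #|[set l : link M k1 k2 | valid_link l && w l]| * pe ^ nf w.
Proof.
rewrite (bigID (fun l => w l)) /=.
rewrite (eq_bigr (fun _ => 1 - pe)); last by move=> l /andP [_ ->].
rewrite [X in _ * X = _](eq_bigr (fun _ => pe)); last by move=> l /andP [_ /negbTE ->].
rewrite (eq_bigl (fun l => l \in [set l : link M k1 k2 | valid_link l && w l])); last by move=> l; rewrite inE.
rewrite [X in _ * X = _](eq_bigl (fun l => l \in FLs w)); last by move=> l; rewrite inE.
by rewrite !big_const !iter_mult.
Qed.

Variables (F : finFieldType) (c : coeffs F M k1 k2) (rate : R) (j : 'I_M) (t : 'I_k1).

Lemma Pout_upper snr d : 0 <= Pe rate snr <= 1 ->
  (forall w, in_outage c w j t -> (d <= nf w)%nat) ->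
  Pout c rate snr j t <=
    INR #|[pred w : pattern M k1 k2 | admissible w && in_outage c w j t]| * Pe rate snr ^ d.
Proof.
move=> [H0 H1] Hd; rewrite /Pout.
apply: Rle_trans (_ : \big[Rplus/R0]_(w : pattern M k1 k2 | admissible w && in_outage c w j t)
   (Pe rate snr ^ d) <= _).
  apply: (big_ind2 (fun a b => a <= b)); [lra | move=> *; lra |].
  move=> w /andP [_ Ho]; rewrite prod_pat.
  have h1 : (1 - Pe rate snr) ^ #|[set l : link M k1 k2 | valid_link l && w l]| <= 1.
    by apply: pow_le1; lra.
  have h2 : Pe rate snr ^ nf w <= Pe rate snr ^ d.
    by apply: Rle_pow_le1 => //; exact: Hd.
  have h3 : 0 <= Pe rate snr ^ nf w by apply: pow_le.
  apply: Rle_trans (Rmult_le_compat_r _ _ _ h3 h1) _; lra.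
rewrite (eq_bigl (fun w => w \in [pred w : pattern M k1 k2 | admissible w && in_outage c w j t])) //.
by rewrite big_const iter_plus; right.
Qed.

Lemma Pout_lower snr d : 0 <= Pe rate snr <= /2 ->
  (nf (@w0 M k1 k2 j t) <= d)%nat ->
  (/2) ^ #|[set l : link M k1 k2 | valid_link l && @w0 M k1 k2 j t l]| * Pe rate snr ^ d
    <= Pout c rate snr j t.
Proof.
move=> [H0 H1] Hd; rewrite /Pout.
rewrite (bigD1 (@w0 M k1 k2 j t)) /=; last by rewrite w0_adm w0_outage.
have Hrest : 0 <= \big[Rplus/R0]_(w : pattern M k1 k2 | (admissible w && in_outage c w j t) && (w != @w0 M k1 k2 j t))
   \big[Rmult/R1]_(l : link M k1 k2 | valid_link l) (if w l then 1 - Pe rate snr else Pe rate snr).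
  apply: (big_ind (fun a => 0 <= a)); [lra | move=> *; lra |].
  move=> w _; apply: (big_ind (fun a => 0 <= a)); [lra | move=> *; nra |].
  move=> l _; case: ifP => _; lra.
rewrite prod_pat.
set n1 := #|_|.
have h1 : (/2) ^ n1 <= (1 - Pe rate snr) ^ n1 by apply: pow_incr; lra.
have h2 : Pe rate snr ^ d <= Pe rate snr ^ nf (@w0 M k1 k2 j t).
  by apply: Rle_pow_le1 => //; lra.
have h3 : 0 <= Pe rate snr ^ d by apply: pow_le.
have h4 : 0 <= (/2) ^ n1 by apply: pow_le; lra.
have h5 := Rmult_le_compat _ _ _ _ h4 h3 h1 h2.
apply: Rle_trans h5 _; rewrite -[X in X <= _]Rplus_0_r; apply: Rplus_le_compat_l; exact: Hrest.
Qed.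
End Bounds.

Section Final.
Local Open Scope R_scope.
Lemma Pe_bounds g : 0 < g <= /2 -> g / 2 <= 1 - exp (- g) <= g.
Proof.
move=> Hg; split.
  have h1 := exp_ineq1_le g.
  have h2 : exp (- g) * exp g = 1 by rewrite -exp_plus Rplus_opp_l exp_0.
  have h3 := exp_pos (- g).
  nra.
have := exp_ineq1_le (- g); lra.
Qed.

Lemma Rpower_gt1 rate : 0 < rate -> 0 < Rpower 2 rate - 1.
Proof.
move=> H; have := Rpower_lt 2 0 rate ltac:(lra) H; rewrite Rpower_O; lra.
Qed.
End Final.

Unset Implicit Arguments.
Theorem theorem1 (M k1 k2 : nat) :
  (2 <= M)%N -> (1 <= k1)%N -> (1 <= k2)%N ->
  exists q0 : nat, forall F : finFieldType, (q0 <= #|F|)%N ->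
    exists c : coeffs F M k1 k2,
      forall rate : R, (0 < rate)%R ->
      forall (j : 'I_M) (t : 'I_k1),
        lim_at_infty
          (fun snr : R => (- ln (Pout c rate snr j t) / ln snr)%R)
          (INR (M + k2)).
Proof.
move=> HM Hk1 Hk2.
have HM0 : (0 < M)%nat by apply: leq_trans HM.
have [q0 Hq0] := @alg_main M k1 k2 HM0 Hk2.
exists q0 => F HF.
have [c Hc] := Hq0 F HF.
exists c => rate Hrate j t.
pose cc := (Rpower 2 rate - 1)%R.
have Hcc : (0 < cc)%R by apply: Rpower_gt1.
pose B := INR #|[pred w : pattern M k1 k2 | admissible w && in_outage c w j t]|.
pose n1 := #|[set l : link M k1 k2 | valid_link l && @w0 M k1 k2 j t l]|.
apply: (@lim_gen _ _ ((/2) ^ n1 * (cc / 2) ^ (M + k2))%R (B * cc ^ (M + k2))%R (2 * cc)%R).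
  apply: Rmult_lt_0_compat; apply: pow_lt; lra.
move=> snr Hs.
have Hsp : (0 < snr)%R by lra.
pose g := (cc / snr)%R.
have Hg : (0 < g <= /2)%R.
  rewrite /g; split; first by apply: Rdiv_lt_0_compat.
  apply: (Rmult_le_reg_r snr) => //; rewrite /Rdiv Rmult_assoc Rinv_l; lra.
have HPe : Pe rate snr = (1 - exp (- g))%R by [].
have [HP1 HP2] := Pe_bounds Hg.
have HPe0 : (0 <= Pe rate snr <= /2)%R by rewrite HPe; lra.
have Hup := @Pout_upper M k1 k2 F c rate j t snr (M + k2) ltac:(lra) (fun w => Hc w j t).
have Hlow := @Pout_lower M k1 k2 F c rate j t snr (M + k2) HPe0 (w0_nf k2 j t HM0).
have Hpd : (0 < snr ^ (M + k2))%R by apply: pow_lt.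
have Hgs : (g * snr = cc)%R by rewrite /g; field; lra.
have HB : (0 <= B)%R by apply: pos_INR.
split.
- apply: Rle_trans (Rmult_le_compat_r _ _ _ (Rlt_le _ _ Hpd) Hlow).
  rewrite Rmult_assoc -Rpow_mult_distr; apply: Rmult_le_compat_l; first by apply: pow_le; lra.
  apply: pow_incr; rewrite HPe; split; first lra.
  have -> : (cc / 2 = g / 2 * snr)%R by rewrite -Hgs; field.
  by apply: Rmult_le_compat_r; lra.
- apply: Rle_trans (Rmult_le_compat_r _ _ _ (Rlt_le _ _ Hpd) Hup) _.
  rewrite Rmult_assoc -Rpow_mult_distr; apply: Rmult_le_compat_l => //.
  apply: pow_incr; rewrite HPe; split; first by apply: Rmult_le_pos; lra.
  rewrite -Hgs; by apply: Rmult_le_compat_r; lra.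
Qed.
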